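(* (1) If $f,g\in\mathcal{P}$, then $\gamma_1 f+\gamma_2 g\in\mathcal{P}$ for all $\gamma_1,\gamma_2\ge0$ (so $\mathcal{P}$ is a convex cone in $\mathcal{L}(G)$). (2) The extreme rays of the cone $\mathcal{P}$ are the sets $\{\gamma u_k:\gamma\ge0\}$, $k\in\{1,\dots,n\}$. (3) $\mathcal{P}_+$ is a convex cone and it is the interior of $\mathcal{P}$. (4) If $f,g\in\mathcal{P}$, then $f\ast g\in\mathcal{P}$. (5) $f\in\mathcal{P}$ if and only if there exists $g\in\mathcal{L}(G)$ with $f=g\ast g$.
   Context: Let $G$ be a graph with vertices $v_1,\dots,v_n$, symmetric non-negative weighted adjacency matrix $\mathbf{A}$, degree matrix $\mathbf{D}=\mathrm{diag}(\sum_k\mathbf{A}_{ik})$ (positive), and normalized Laplacian $\mathbf{L}=\mathbf{I}_n-\mathbf{D}^{-1/2}\mathbf{A}\mathbf{D}^{-1/2}$. Signals are vectors in $\mathcal{L}(G)\cong\mathbb{R}^n$ with standard basis $e_1,\dots,e_n$. Fix an orthonormal eigendecomposition $\mathbf{L}=\mathbf{U}\,\mathrm{diag}(\lambda_1,\dots,\lambda_n)\mathbf{U}^\intercal$ with columns $u_1,\dots,u_n$. Fourier transform $\hat{x}=\mathbf{U}^\intercal x$; convolution $x\ast y=\mathbf{C}_x y$ with $\mathbf{C}_x=\mathbf{U}\,\mathrm{diag}(\hat{x})\mathbf{U}^\intercal$. For $f\in\mathcal{L}(G)$ let $(\mathbf{K}_f)_{ij}=(\mathbf{C}_{e_j}f)(v_i)$;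 $f$ is positive semi-definite (positive definite) if $\mathbf{K}_f$ is symmetric and positive semi-definite (strictly positive definite). $\mathcal{P}$ and $\mathcal{P}_+$ denote the sets of positive semi-definite and positive definite functions, respectively. *)

(* Defs.v *)
From HB Require Import structures.
From mathcomp Require Import all_boot all_order all_algebra.
From mathcomp Require Import all_classical all_reals topology matrix_topology normedtype.
Import numFieldNormedType.Exports.
Set Implicit Arguments. Unset Strict Implicit. Unset Printing Implicit Defensive.
Import Order.TTheory GRing.Theory Num.Theory.
Local Open Scope ring_scope.
Local Open Scope classical_set_scope.

Section GSP.
Variables (R : realType) (n : nat).

Definition degv (A : 'M[R]_n) (i : 'I_n) : R := \sum_(k < n) A i k.

Definition Dinvsqrt (A : 'M[R]_n) : 'M[R]_n :=
  diag_mx (\row_i (Num.sqrt (degv A i))^-1).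

Definition normLap (A : 'M[R]_n) : 'M[R]_n :=
  1%:M - Dinvsqrt A *m A *m Dinvsqrt A.

Definition ebasis (j : 'I_n) : 'cV[R]_n := delta_mx j 0.

Definition gft (U : 'M[R]_n) (x : 'cV[R]_n) : 'cV[R]_n := U^T *m x.

Definition convop (U : 'M[R]_n) (x : 'cV[R]_n) : 'M[R]_n :=
  U *m diag_mx (gft U x)^T *m U^T.

Definition gconv (U : 'M[R]_n) (x y : 'cV[R]_n) : 'cV[R]_n := convop U x *m y.

Definition Kmat (U : 'M[R]_n) (f : 'cV[R]_n) : 'M[R]_n :=
  \matrix_(i, j) (convop U (ebasis j) *m f) i 0.

Definition sym_psd (M : 'M[R]_n) : Prop :=
  M^T = M /\ forall v : 'cV[R]_n, 0 <= (v^T *m M *m v) 0 0.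

Definition sym_pd (M : 'M[R]_n) : Prop :=
  M^T = M /\ forall v : 'cV[R]_n, v != 0 -> 0 < (v^T *m M *m v) 0 0.

Definition Ppsd (U : 'M[R]_n) : set 'cV[R]_n := [set f | sym_psd (Kmat U f)].
Definition Ppd (U : 'M[R]_n) : set 'cV[R]_n := [set f | sym_pd (Kmat U f)].

Definition convex_cone (C : set 'cV[R]_n) : Prop :=
  (forall x y, C x -> C y -> C (x + y)) /\
  (forall (g : R) x, 0 < g -> C x -> C (g *: x)).

Definition ray (r : 'cV[R]_n) : set 'cV[R]_n := [set g *: r | g in [set g : R | 0 <= g]].

Definition extreme_ray (C : set 'cV[R]_n) (E : set 'cV[R]_n) : Prop :=
  exists r, [/\ C r, r != 0, E = ray r &
    forall x y, C x -> C y -> E (x + y) -> E x /\ E y].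

End GSP.

(* Main.v *)
Require Import Defs.
From HB Require Import structures.
From mathcomp Require Import all_boot all_order all_algebra.
From mathcomp Require Import all_classical all_reals topology matrix_topology normedtype.
From mathcomp Require Import ring lra.
Import numFieldNormedType.Exports.
Import Order.TTheory GRing.Theory Num.Theory.
Local Open Scope ring_scope.
Local Open Scope classical_set_scope.

Set Implicit Arguments. Unset Strict Implicit.
Section Core.
Variables (R : realType) (n : nat) (U : 'M[R]_n).
Hypothesis hU : U^T *m U = 1%:M.

Lemma UUt : U *m U^T = 1%:M.
Proof. exact: mulmx1C. Qed.

Local Notation c f := (gft U f).

Lemma KmatE f : Kmat U f = U *m diag_mx (c f)^T *m U^T.
Proof.
apply/matrixP => i j; rewrite /Kmat /convop mxE.
rewrite -!mulmxA !mul_diag_mx mxE [RHS]mxE.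
apply: eq_bigr => k _; rewrite !mxE.
have -> : \sum_j0 U^T k j0 * delta_mx j (0:'I_1) j0 0 = U j k.
  rewrite (bigD1 j) //= big1 ?addr0; first by rewrite !mxE !eqxx mulr1.
  by move=> l /negbTE hl; rewrite !mxE hl mulr0.
ring.
Qed.

Lemma quadE (w : 'cV[R]_n) f :
  ((U *m w)^T *m Kmat U f *m (U *m w)) 0 0 = \sum_k (w k 0)^+2 * c f k 0.
Proof.
rewrite KmatE trmx_mul.
have -> : w^T *m U^T *m (U *m diag_mx (c f)^T *m U^T) *m (U *m w)
   = w^T *m (U^T *m U) *m diag_mx (c f)^T *m (U^T *m U) *m w.
  by rewrite !mulmxA.
rewrite hU mulmx1 mul_mx_diag mulmx1 mxE; apply: eq_bigr => k _.
by rewrite !mxE; ring.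
Qed.

Lemma UtU_w (w : 'cV[R]_n) : U^T *m (U *m w) = w.
Proof. by rewrite mulmxA hU mul1mx. Qed.

Lemma vE (v : 'cV[R]_n) : v = U *m (U^T *m v).
Proof. by rewrite mulmxA UUt mul1mx. Qed.

Lemma Ksym f : (Kmat U f)^T = Kmat U f.
Proof. by rewrite KmatE !trmx_mul trmxK tr_diag_mx mulmxA. Qed.

Lemma cdelta (k : 'I_n) l : (c (U *m delta_mx k (0:'I_1))) l 0 = (l == k)%:R.
Proof. by rewrite /gft UtU_w mxE eqxx andbT. Qed.

Lemma quad_delta f (k : 'I_n) :
  ((U *m delta_mx k (0:'I_1))^T *m Kmat U f *m (U *m delta_mx k (0:'I_1))) 0 0 = c f k 0.
Proof.
rewrite quadE (bigD1 k) //= big1 ?addr0; first by rewrite mxE !eqxx expr1n mul1r.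
by move=> l /negbTE hl; rewrite mxE hl /= expr0n mul0r.
Qed.

Lemma psdP f : Ppsd U f <-> forall k, 0 <= c f k 0.
Proof.
split.
  by move=> [_ H] k; rewrite -quad_delta; apply: H.
move=> H; split; first exact: Ksym.
move=> v; rewrite [v]vE quadE; apply: sumr_ge0 => k _.
by apply: mulr_ge0 => //; apply: sqr_ge0.
Qed.

Lemma gft_inj x y : c x = c y -> x = y.
Proof. by rewrite /gft => h; rewrite [x]vE [y]vE h. Qed.

Lemma gft0 : c 0 = 0.
Proof. by rewrite /gft mulmx0. Qed.

Lemma pdP f : Ppd U f <-> forall k, 0 < c f k 0.
Proof.
split.
  move=> [_ H] k; rewrite -quad_delta; apply: H.
  apply/eqP => h; have := cdelta k k; rewrite h gft0 mxE eqxx => /eqP.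
  by rewrite eq_sym oner_eq0.
move=> H; split; first exact: Ksym.
move=> v vn0; rewrite [v]vE quadE.
have [l hl] : exists l, (U^T *m v) l 0 != 0.
  apply/not_existsP => hall; move/eqP: vn0; apply; rewrite [v]vE.
  have -> : U^T *m v = 0.
    apply/matrixP => i j; rewrite (ord1 j) [RHS]mxE.
    by have := hall i; move/negP; rewrite negbK => /eqP.
  by rewrite mulmx0.
rewrite (bigD1 l) //=; apply: ltr_pwDl.
  by apply: mulr_gt0 => //; rewrite exprn_even_gt0.
apply: sumr_ge0 => k _; apply: mulr_ge0; first exact: sqr_ge0.
exact: ltW.
Qed.

Lemma gftD x y : c (x + y) = c x + c y.
Proof. by rewrite /gft mulmxDr. Qed.
Lemma gftZ a x : c (a *: x) = a *: c x.
Proof. by rewrite /gft scalemxAr. Qed.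

Lemma gft_conv f g k : c (gconv U f g) k 0 = c f k 0 * c g k 0.
Proof.
rewrite /gconv /convop /gft -!mulmxA UtU_w mul_diag_mx !mxE //.
Qed.

Lemma gftB x y : c (x - y) = c x - c y.
Proof. by rewrite /gft mulmxBr. Qed.

Lemma cD x y l : c (x + y) l 0 = c x l 0 + c y l 0.
Proof. by rewrite /gft !mxE -big_split; apply: eq_bigr => i _; rewrite !mxE mulrDr. Qed.
Lemma cZ a x l : c (a *: x) l 0 = a * c x l 0.
Proof. by rewrite /gft !mxE mulr_sumr; apply: eq_bigr => i _; rewrite !mxE mulrCA. Qed.
Lemma cB x y l : c (x - y) l 0 = c x l 0 - c y l 0.
Proof. by rewrite /gft !mxE -sumrB; apply: eq_bigr => i _; rewrite !mxE mulrBr. Qed.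
Lemma c0 l : c 0 l 0 = 0.
Proof. by rewrite gft0 mxE. Qed.

Lemma ccol (k l : 'I_n) : c (col k U) l 0 = if l == k then 1 else 0.
Proof. by rewrite colE cdelta; case: (l == k). Qed.

Lemma ray_scale (a : R) (s : 'cV[R]_n) : 0 < a -> ray (a *: s) = ray s.
Proof.
move=> a0; apply/seteqP; split => x [g /= g0 <-].
- exists (g * a); first by rewrite /= mulr_ge0 // ltW.
  by rewrite scalerA.
- exists (g / a); first by rewrite /= divr_ge0 // ltW.
  by rewrite scalerA divfK // gt_eqF.
Qed.

Lemma ray_col_extreme k : extreme_ray (Ppsd U) (ray (col k U)).
Proof.
exists (col k U); split => //.
- by apply/psdP => l; rewrite ccol; case: (l == k).
- apply/eqP => h; have := ccol k k; rewrite h gft0 mxE eqxx => /eqP.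
  by rewrite eq_sym oner_eq0.
- move=> x y /psdP hx /psdP hy [g g0 hxy].
  have key : forall x' y', (forall l, 0 <= c x' l 0) -> (forall l, 0 <= c y' l 0) ->
      g *: col k U = x' + y' -> ray (col k U) x'.
    move=> x' y' hx' hy' e; exists (c x' k 0); first exact: hx'.
    apply: gft_inj; apply/matrixP => l j; rewrite (ord1 j) gftZ mxE ccol.
    have := congr1 (fun M => c M l 0) e; rewrite /= cD cZ ccol.
    case: eqP => [->|_] /=; first by move=> _; rewrite mulr1.
    by rewrite !mulr0 => /esym /eqP; rewrite paddr_eq0 // => /andP [/eqP -> _].
  split; first exact: key hx hy hxy.
  by apply: key hy hx _; rewrite addrC.
Qed.

Lemma extreme_col E : extreme_ray (Ppsd U) E -> exists k, E = ray (col k U).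
Proof.
move=> [r [/psdP hr rn0 -> hext]].
have [k hk] : exists k, c r k 0 != 0.
  apply/not_existsP => hall; move/eqP: rn0; apply; apply: gft_inj.
  rewrite gft0; apply/matrixP => i j; rewrite (ord1 j) [RHS]mxE.
  by move: (hall i) => /negP; rewrite negbK => /eqP.
have ck : 0 < c r k 0 by rewrite lt_def hk hr.
set x := c r k 0 *: col k U.
have hx : Ppsd U x.
  apply/psdP => l; rewrite cZ ccol; apply: mulr_ge0; [exact: ltW | by case: (l == k)].
have hy : Ppsd U (r - x).
  apply/psdP => l; rewrite cB cZ ccol.
  case: eqP => [->|_] /=; first by rewrite mulr1 subrr.
  by rewrite mulr0 subr0.
have : ray r (x + (r - x)).
  by rewrite addrC subrK; exists 1; [rewrite /= ler01 | rewrite scale1r].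
move=> /(hext _ _ hx hy) [[g /= g0 hg] _].
have gn0 : g != 0.
  apply/eqP => g0'; move: hg; rewrite g0' scale0r => /(congr1 (fun M => c M k 0)).
  rewrite c0 cZ ccol eqxx mulr1 => h.
  by rewrite -h eqxx in hk.
exists k.
have -> : r = (c r k 0 / g) *: col k U.
  by rewrite mulrC -scalerA -/x -hg scalerA mulVf // scale1r.
apply: ray_scale; apply: divr_gt0 => //.
by rewrite lt_def gn0 g0.
Qed.

Lemma interiorE : Ppd U = interior (Ppsd U).
Proof.
apply/seteqP; split.
- move=> f /pdP hf.
  suff hN : nbhs f [set g | forall k, 0 < c g k 0].
    by apply: filterS hN => g hg; apply/psdP => k; exact: ltW (hg k).
  apply: (@filter_forall _ 'I_n (fun k g => 0 < c g k 0) (nbhs f) _) => k.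
  set S := \sum_l `|U l k|.
  have S0 : 0 <= S by apply: sumr_ge0.
  apply/nbhs_ballP; exists (c f k 0 / (S + 1)).
    by apply: divr_gt0 => //; rewrite ltr_wpDl.
  move=> g [_ hb].
  have hb' : forall i, `|f i 0 - g i 0| < c f k 0 / (S + 1).
    by move=> i; have := hb i 0; rewrite /ball /=.
  have d : c f k 0 - c g k 0 = \sum_l U^T k l * (f l 0 - g l 0).
    by rewrite -cB /gft mxE; apply: eq_bigr => l _; rewrite !mxE.
  have b : c f k 0 - c g k 0 <= S * (c f k 0 / (S + 1)).
    rewrite d mulr_suml; apply: le_trans (ler_norm _) _.
    apply: le_trans (ler_norm_sum _ _ _) _; apply: ler_sum => l _.
    rewrite normrM mxE; apply: ler_wpM2l => //; exact: ltW (hb' l).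
  have : S * (c f k 0 / (S + 1)) < c f k 0.
    have hf' := hf k.
    rewrite mulrA ltr_pdivrMr; last by rewrite ltr_wpDl.
    nra.
  move=> h2 /=; lra.
- move=> f hf; apply/pdP => k.
  have /psdP hc : Ppsd U f := nbhs_singleton hf.
  rewrite lt_def hc andbT; apply/eqP => hz.
  move/nbhs_ballP: hf => [e /= e0 hball].
  set S := \sum_l `|U l k|.
  have S0 : 0 <= S by apply: sumr_ge0.
  have S1 : 0 < S + 1 by rewrite ltr_wpDl.
  set d := e / (S + 1).
  have d0 : 0 < d by apply: divr_gt0.
  have : Ppsd U (f - d *: col k U).
    apply: hball; split => // i j; rewrite /ball /= (ord1 j) !mxE.
    rewrite opprD opprK addrA subrr add0r normrM (gtr0_norm d0).
    have hUi : `|U i k| <= S.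
      by rewrite /S (bigD1 i) //= lerDl sumr_ge0.
    have : d * S < e.
      by rewrite /d mulrAC ltr_pdivrMr //; nra.
    have : d * `|U i k| <= d * S by apply: ler_wpM2l => //; exact: ltW.
    lra.
  move/psdP => /(_ k); rewrite cB cZ ccol eqxx mulr1 hz.
  lra.
Qed.

End Core.

Theorem corollary1 (R : realType) (n : nat) (A : 'M[R]_n)
  (U : 'M[R]_n) (lam : 'rV[R]_n) :
  A^T = A ->
  (forall i j, 0 <= A i j) ->
  (forall i, 0 < degv A i) ->
  U^T *m U = 1%:M ->
  normLap A = U *m diag_mx lam *m U^T ->
  [/\ (* (1) *)
      (forall f g (g1 g2 : R), Ppsd U f -> Ppsd U g -> 0 <= g1 -> 0 <= g2 ->
         Ppsd U (g1 *: f + g2 *: g)),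
      (* (2) *)
      (forall E : set 'cV[R]_n,
         extreme_ray (Ppsd U) E <-> exists k : 'I_n, E = ray (col k U)),
      (* (3) *)
      convex_cone (Ppd U) /\ Ppd U = interior (Ppsd U),
      (* (4) *)
      (forall f g, Ppsd U f -> Ppsd U g -> Ppsd U (gconv U f g)) &
      (* (5) *)
      (forall f, Ppsd U f <-> exists g, f = gconv U g g)].
Proof.
move=> _ _ _ hU _; split.
- move=> f g g1 g2 /(psdP hU) hf /(psdP hU) hg h1 h2; apply/(psdP hU) => k.
  by rewrite cD cZ cZ; apply: addr_ge0; apply: mulr_ge0.
- move=> E; split; first exact: extreme_col.
  by move=> [k ->]; apply: ray_col_extreme.
- split; last exact: interiorE.
  split.
  + move=> x y /(pdP hU) hx /(pdP hU) hy; apply/(pdP hU) => k.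
    by rewrite cD; apply: addr_gt0.
  + move=> a x a0 /(pdP hU) hx; apply/(pdP hU) => k.
    by rewrite cZ; apply: mulr_gt0.
- move=> f g /(psdP hU) hf /(psdP hU) hg; apply/(psdP hU) => k.
  by rewrite (gft_conv hU); apply: mulr_ge0.
- move=> f; split.
  + move=> /(psdP hU) hf; exists (U *m map_mx Num.sqrt (gft U f)).
    apply: (gft_inj hU); apply/matrixP => k j; rewrite (ord1 j) (gft_conv hU).
    have -> : gft U (U *m map_mx Num.sqrt (gft U f)) = map_mx Num.sqrt (gft U f).
      by rewrite /gft (UtU_w hU).
    have hs : (map_mx Num.sqrt (gft U f)) k 0 = Num.sqrt (gft U f k 0) by rewrite mxE.
    by rewrite hs -expr2 sqr_sqrtr.
  + move=> [g ->]; apply/(psdP hU) => k.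
    by rewrite (gft_conv hU) -expr2 sqr_ge0.
Qed.
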